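(* Let $G=(V,E)$ be a $k$-uniform cored hypergraph ($k\ge3$) and let $\mathbf x\in\mathbb R^n$ be an H-eigenvector of its Laplacian tensor $\mathcal L$ corresponding to an H-eigenvalue $\lambda\ge1$. For each $e\in E$ let $i_e\in e$ be a cored vertex. Then $\prod_{s\in e}x_s\le0$ for all $e\in E$ when $k$ is even, and $\prod_{s\in e\setminus\{i_e\}}x_s\le0$ for all $e\in E$ when $k$ is odd.
   Context: A $k$-uniform hypergraph $G=(V,E)$ has $V=[n]$ and a nonempty set $E$ of $k$-element subsets of $V$; $d_i$ is the number of edges containing $i$. A cored vertex is a vertex of degree one; $G$ is cored if every edge contains a cored vertex. The Laplacian tensor $\mathcal L=\mathcal D-\mathcal A$ ($\mathcal D$ diagonal with entries $d_i$, $\mathcal A$ with entries $\frac1{(k-1)!}$ at index tuples forming an edge and $0$ otherwise) satisfies $(\mathcal L\mathbf x^{k-1})_i=d_ix_i^{k-1}-\sum_{e\in E,\,i\in e}\prod_{s\in e\setminus\{i\}}x_s$. A real $\lambda$ is an H-eigenvalue with H-eigenvector $\mathbf x\neq0$ if $(\mathcal L\mathbf x^{k-1})_i=\lambda x_i^{k-1}$ for all $i$. *)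

(* Defs.v *)
From mathcomp Require Import all_boot all_order all_algebra.
Set Implicit Arguments. Unset Strict Implicit. Unset Printing Implicit Defensive.
Import Order.TTheory GRing.Theory Num.Theory.
Local Open Scope ring_scope.

Definition uniform_hypergraph (n k : nat) (E : {set {set 'I_n}}) : Prop :=
  E != set0 /\ forall e, e \in E -> #|e| = k.

Definition hdeg (n : nat) (E : {set {set 'I_n}}) (i : 'I_n) : nat :=
  #|[set e in E | i \in e]|.

Definition cored_vertex (n : nat) (E : {set {set 'I_n}}) (i : 'I_n) : Prop :=
  hdeg E i = 1%N.

Definition cored (n : nat) (E : {set {set 'I_n}}) : Prop :=
  forall e, e \in E -> exists2 i, i \in e & cored_vertex E i.

(* (L x^{k-1})_i = d_i x_i^{k-1} - sum_{e in E, i in e} prod_{s in e \ {i}} x_s *)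
Definition laplacian_apply (R : pzRingType) (n k : nat) (E : {set {set 'I_n}})
  (x : 'I_n -> R) (i : 'I_n) : R :=
  (hdeg E i)%:R * x i ^+ k.-1
  - \sum_(e in E | i \in e) \prod_(s in e :\ i) x s.

Definition H_eigenpair (R : pzRingType) (n k : nat) (E : {set {set 'I_n}})
  (lambda : R) (x : 'I_n -> R) : Prop :=
  (exists i, x i != 0) /\
  forall i, laplacian_apply k E x i = lambda * x i ^+ k.-1.

(* Main.v *)
Require Import Defs.
From mathcomp Require Import all_boot all_order all_algebra.
Import Order.TTheory GRing.Theory Num.Theory.
Local Open Scope ring_scope.

Theorem lemma3p3 (R : realFieldType) (n k : nat) (E : {set {set 'I_n}})
  (lambda : R) (x : 'I_n -> R) (ie : {set 'I_n} -> 'I_n) :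
  (3 <= k)%N ->
  uniform_hypergraph k E ->
  cored E ->
  H_eigenpair k E lambda x ->
  1 <= lambda ->
  (forall e, e \in E -> ie e \in e /\ cored_vertex E (ie e)) ->
  (~~ odd k -> forall e, e \in E -> \prod_(s in e) x s <= 0) /\
  (odd k -> forall e, e \in E -> \prod_(s in e :\ ie e) x s <= 0).
Proof.
move=> k3 _ _ [_ Heig] l1 Hie.
have key : forall e, e \in E ->
  \prod_(s in e :\ ie e) x s = (1 - lambda) * x (ie e) ^+ k.-1.
  move=> e eE; have [ie_e cv] := Hie e eE.
  have := Heig (ie e); rewrite /laplacian_apply.
  have -> : \sum_(e' in E | ie e \in e') \prod_(s in e' :\ ie e) x s
          = \sum_(e' in [set e' in E | ie e \in e']) \prod_(s in e' :\ ie e) x s.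
    by apply: eq_bigl => e'; rewrite inE.
  move: cv; rewrite /cored_vertex /hdeg => cv.
  have [a Ha] := cards1P (introT eqP cv).
  have : e \in [set e' in E | ie e \in e'] by rewrite inE eE ie_e.
  rewrite Ha inE => /eqP ea; subst a.
  rewrite big_set1 cards1 mul1r => H.
  have -> : (1 - lambda) * x (ie e) ^+ k.-1 =
     x (ie e) ^+ k.-1 - lambda * x (ie e) ^+ k.-1 by rewrite mulrBl mul1r.
  by rewrite -H opprB addrC subrK.
have l0 : 1 - lambda <= 0 by rewrite subr_le0.
split.
- move=> ek e eE; have [ie_e _] := Hie e eE.
  rewrite (big_setD1 (ie e)) //= key // mulrCA -exprS prednK; last by apply: leq_trans k3.
  apply: mulr_le0_ge0 => //; exact: exprn_even_ge0.
- move=> ok e eE; rewrite key //.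
  apply: mulr_le0_ge0 => //; apply: exprn_even_ge0.
  by move: ok; case: (k) k3 => //= k0 _; rewrite negbK.
Qed.
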